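(* Let $m\ge2$ and consider a preferential (dynamic) attachment circuit of index $m$. Let $W_n$ and $B_n$ be the numbers of white and blue external nodes after $n$ insertions. For $n\ge1$, $$\mathbb{E}[W_n^2]=\frac{(m+1)^3n^3}{(mn+n-1)(2m+1)^2}+\frac{(8m^2-m-1)(m+1)^2n^2+m(m+1)(3m^2-6m-1)n-m(2m^3+6m^2+3m+1)}{(mn+n-1)(2m+1)^2(3m+1)},$$ $$\mathbb{E}[B_n^2]=\frac{4m^2(m+1)^2}{(3m+1)^2(2m+1)^2}\,n^2+\frac{96m^4+138m^3+83m^2+18m+1}{(5m+1)(4m+1)(3m+1)^2}\cdot\frac{4(m+1)m}{(2m+1)^2}\,n+O(1)\quad(n\to\infty).$$
   Context: Preferential (dynamic) attachment circuit of index $m\ge1$: at time $0$ there is a single node labeled $0$. At each time $n\ge1$ a new node labeled $n$ is added and $m$ parents are chosen for it one at a time, with replacement, among nodes $0,\dots,n-1$. Before the $(i+1)$-th choice ($i=0,\dots,m-1$), each existing node $v$ is chosen with probability $\frac{d_i(v)+1}{\sum_{x}(d_i(x)+1)}$, where $d_i(x)$ is the outdegree of $x$ in the current multigraph including the edges created by the first $i$ choices for node $n$; after each choice an edge from the chosen parent to node $n$ is immediately added (multi-edges allowed, counted with multiplicity). External nodes: a node of outdegree $s$ carries $s+1$ external nodes, colored white if the node has outdegree $0$, blue if outdegree $1$, red if outdegree $\ge2$. Thus $W_n$ equals the number of nodes of outdegree $0$ and $B_n$ equals twice the number of nodes of outdegree $1$. *)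

(* Defs.v *)
From mathcomp Require Import all_boot all_order all_algebra.
Set Implicit Arguments. Unset Strict Implicit. Unset Printing Implicit Defensive.
Import Order.TTheory GRing.Theory Num.Theory.
Local Open Scope ring_scope.

(* A finitely supported distribution: a list of (probability, outcome) pairs
   (outcomes may repeat; their weights add up). *)
Definition dist (A : Type) := seq (rat * A).

Definition dist_bind (A B : Type) (D : dist A) (f : A -> dist B) : dist B :=
  flatten [seq [seq (pa.1 * qb.1, qb.2) | qb <- f pa.2] | pa <- D].

Definition expect (A : Type) (D : dist A) (X : A -> rat) : rat :=
  \sum_(pa <- D) pa.1 * X pa.2.

(* The state of the circuit is the sequence of outdegrees d(0), ..., d(k-1)
   of the existing nodes 0..k-1 (multi-edges counted with multiplicity). *)
Definition choose_parent (s : seq nat) : dist (seq nat) :=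
  [seq (((nth 0 s i).+1)%:R / (sumn s + size s)%:R, incr_nth s i)
  | i <- iota 0 (size s)].

Definition insert_node (m : nat) (s : seq nat) : dist (seq nat) :=
  [seq (pt.1, rcons pt.2 0%N)
  | pt <- iter m (fun D => dist_bind D choose_parent) [:: (1, s)]].

Definition pa_circuit (m n : nat) : dist (seq nat) :=
  iter n (fun D => dist_bind D (insert_node m)) [:: (1, [:: 0%N])].

(* White external nodes: number of nodes of outdegree 0.
   Blue external nodes: twice the number of nodes of outdegree 1. *)
Definition white (s : seq nat) : nat := count (fun d => d == 0%N) s.
Definition blue (s : seq nat) : nat := 2 * count (fun d => d == 1%N) s.

(* Main.v *)
Require Import Defs.
From mathcomp Require Import all_boot all_order all_algebra.
From mathcomp Require Import ring lra zify.
From Stdlib Require Import Lia.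
Import Order.TTheory GRing.Theory Num.Theory.
Local Open Scope ring_scope.

Definition cnt1 (s : seq nat) : nat := count (fun d => d == 1%N) s.
Definition Tot (s : seq nat) : nat := (sumn s + size s)%N.
Definition wq (s : seq nat) : rat := (white s)%:R.
Definition cq (s : seq nat) : rat := (cnt1 s)%:R.
Definition cpX (X : seq nat -> rat) (s : seq nat) : rat := expect (choose_parent s) X.

Lemma expect_bind (A B : Type) (D : dist A) (f : A -> dist B) (X : B -> rat) :
  expect (dist_bind D f) X = expect D (fun a => expect (f a) X).
Proof.
rewrite /expect /dist_bind big_flatten /= big_map.
apply: eq_bigr => pa _; rewrite big_map mulr_sumr; apply: eq_bigr => qb _ /=.
by rewrite mulrA.
Qed.

Lemma expect_iter (i : nat) (D : dist (seq nat)) (X : seq nat -> rat) :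
  expect (iter i (fun D => dist_bind D choose_parent) D) X = expect D (iter i cpX X).
Proof.
elim: i X => [|i IH] X //=.
by rewrite expect_bind IH -iterSr.
Qed.

Lemma expect_single (A : Type) (a : A) (X : A -> rat) : expect [:: (1, a)] X = X a.
Proof. by rewrite /expect big_cons big_nil /= mul1r addr0. Qed.

Lemma expect_pa (m k : nat) (X : seq nat -> rat) :
  expect (pa_circuit m k.+1) X =
  expect (pa_circuit m k) (fun s => iter m cpX (fun t => X (rcons t 0%N)) s).
Proof.
rewrite /pa_circuit iterS -/(pa_circuit m k) expect_bind.
apply: eq_bigr => pa _; congr (_ * _).
rewrite /insert_node /expect big_map /= -/(expect _ (fun t => X (rcons t 0%N))).
by rewrite expect_iter expect_single.
Qed.

Lemma sumn_incr_nth (s : seq nat) (i : nat) : sumn (incr_nth s i) = (sumn s).+1.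
Proof.
elim: s i => [|x s IH] [|i] //=.
- by elim: i => [|i IHi] //=.
- by rewrite IH addnS.
Qed.

Lemma Tot_incr (s : seq nat) (i : nat) : (i < size s)%N -> Tot (incr_nth s i) = (Tot s).+1.
Proof. by move=> lt; rewrite /Tot sumn_incr_nth size_incr_nth lt addSn. Qed.

Lemma cpX_ext (X Y : seq nat -> rat) (s : seq nat) :
  (forall t, Tot t = (Tot s).+1 -> X t = Y t) -> cpX X s = cpX Y s.
Proof.
move=> H; rewrite /cpX /expect /choose_parent !big_map.
apply: eq_big_seq => i; rewrite mem_iota add0n => /andP[_ lt] /=.
by rewrite H // Tot_incr.
Qed.

Lemma cpX_lin (a b : rat) (X Y : seq nat -> rat) (s : seq nat) :
  cpX (fun t => a * X t + b * Y t) s = a * cpX X s + b * cpX Y s.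
Proof.
rewrite /cpX /expect (eq_bigr (fun pa => a * (pa.1 * X pa.2) + b * (pa.1 * Y pa.2))).
  by rewrite big_split /= -!mulr_sumr.
by move=> pa _; ring.
Qed.

Lemma iter_ext (i : nat) (X Y : seq nat -> rat) :
  (forall t, X t = Y t) -> forall s, iter i cpX X s = iter i cpX Y s.
Proof.
elim: i => [|i IH] H s /=; first exact: H.
by apply: cpX_ext => t _; apply: IH.
Qed.

Lemma iter_lin (i : nat) (a b : rat) (X Y : seq nat -> rat) (s : seq nat) :
  iter i cpX (fun t => a * X t + b * Y t) s = a * iter i cpX X s + b * iter i cpX Y s.
Proof.
elim: i s => [|i IH] s //=.
rewrite -cpX_lin; apply: cpX_ext => t _; exact: IH.
Qed.

Definition c6 := (rat * rat * rat * rat * rat * rat)%type.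
Definition ev6 (k : c6) (e0 e1 e2 e3 e4 e5 : rat) : rat :=
  let: (k0, k1, k2, k3, k4, k5) := k in
  k0 * e0 + k1 * e1 + k2 * e2 + k3 * e3 + k4 * e4 + k5 * e5.
Definition g6 (k : c6) (W C : rat) : rat := ev6 k 1 W C (W ^+ 2) (W * C) (C ^+ 2).

Lemma wq_cons x t : wq (x :: t) = (x == 0%N)%:R + wq t.
Proof. by rewrite /wq /white /= natrD. Qed.
Lemma cq_cons x t : cq (x :: t) = (x == 1%N)%:R + cq t.
Proof. by rewrite /cq /cnt1 /= natrD. Qed.
Lemma Tot_cons x t : (Tot (x :: t))%:R = x%:R + 1 + (Tot t)%:R :> rat.
Proof. by rewrite /Tot /= -addnA addnCA addnS -add1n !natrD; ring. Qed.

Lemma choice_sum (k : c6) (s : seq nat) (a b : rat) :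
  \sum_(i <- iota 0 (size s)) ((nth 0%N s i).+1)%:R * g6 k (a + wq (incr_nth s i)) (b + cq (incr_nth s i))
  = wq s * g6 k (a + wq s - 1) (b + cq s + 1) + 2 * cq s * g6 k (a + wq s) (b + cq s - 1)
    + ((Tot s)%:R - wq s - 2 * cq s) * g6 k (a + wq s) (b + cq s).
Proof.
elim: s a b => [|x s IH] a b.
  by rewrite big_nil /wq /cq /Tot /=; ring.
rewrite [size _]/= [iota _ _]/= big_cons.
have -> : iota 1 (size s) = [seq (1 + i)%N | i <- iota 0 (size s)] by rewrite -iotaDl.
rewrite big_map.
rewrite (eq_bigr (fun i => ((nth 0%N s i).+1)%:R * g6 k (a + (x == 0%N)%:R + wq (incr_nth s i)) (b + (x == 1%N)%:R + cq (incr_nth s i)))); last first.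
  by move=> i _; rewrite add1n /= wq_cons cq_cons !addrA.
rewrite IH /= Tot_cons !wq_cons !cq_cons.
clear IH; case: k => [[[[[k0 k1] k2] k3] k4] k5]; rewrite /g6 /ev6.
case: x => [|[|x]] /=; ring.
Qed.

Lemma cpX_g6 (k : c6) (s : seq nat) : (0 < Tot s)%N ->
  cpX (fun t => g6 k (wq t) (cq t)) s =
  (wq s * g6 k (wq s - 1) (cq s + 1) + 2 * cq s * g6 k (wq s) (cq s - 1)
   + ((Tot s)%:R - wq s - 2 * cq s) * g6 k (wq s) (cq s)) / (Tot s)%:R.
Proof.
move=> Hs.
rewrite /cpX /expect /choose_parent big_map /= -/(Tot s).
rewrite (eq_bigr (fun i => (Tot s)%:R^-1 * (((nth 0%N s i).+1)%:R *
   g6 k (0 + wq (incr_nth s i)) (0 + cq (incr_nth s i))))); last first.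
  by move=> i _ /=; rewrite !add0r; ring.
by rewrite -mulr_sumr choice_sum !add0r mulrC.
Qed.

Lemma cpX_mulr (c : rat) (X : seq nat -> rat) (s : seq nat) :
  cpX X s * c = cpX (fun t => X t * c) s.
Proof.
rewrite /cpX /expect mulr_suml; apply: eq_bigr => pa _; by rewrite mulrA.
Qed.

Lemma multi (base : c6) (NX : rat -> rat) (PX : rat -> rat -> c6)
  (H0 : forall T W C, g6 base W C * NX T = g6 (PX T 0) W C)
  (HS : forall T i W C, T != 0 ->
     (W * g6 (PX (T + 1) i) (W - 1) (C + 1) + 2 * C * g6 (PX (T + 1) i) W (C - 1)
      + (T - W - 2 * C) * g6 (PX (T + 1) i) W C) / T = g6 (PX T (i + 1)) W C) :
  forall i s, (0 < Tot s)%N ->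
  iter i cpX (fun t => g6 base (wq t) (cq t)) s * NX ((Tot s + i)%N%:R)
  = g6 (PX (Tot s)%:R i%:R) (wq s) (cq s).
Proof.
elim=> [|i IH] s Hs.
  by rewrite /= addn0 H0.
rewrite iterS cpX_mulr.
rewrite (@cpX_ext _ (fun t => g6 (PX ((Tot s)%:R + 1) i%:R) (wq t) (cq t))); last first.
  move=> t Ht; rewrite natr1 -Ht -IH ?Ht //.
  by rewrite addSnnS.
rewrite cpX_g6 // HS ?natr1 //.
by rewrite pnatr_eq0 -lt0n.
Qed.

Definition N1 (x : rat) : rat := x - 1.
Definition N2 (x : rat) : rat := (x - 1) * (x - 2).
Definition N3 (x : rat) : rat := (x - 1) * (x - 2) * (x - 3).
Definition N4 (x : rat) : rat := (x - 1) * (x - 2) * (x - 3) * (x - 4).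
Definition S1 (T i : rat) : rat :=
  ((T - 2 + i) * (T - 3 + i) * (T - 4 + i) - (T - 2) * (T - 3) * (T - 4)) / 3.
Definition S2 (T i : rat) : rat := i * (T - 3) + i * (i - 1) / 2.
Definition S3 (T i : rat) : rat := (T - 3) * i * (i - 1) / 2 + (i - 1) * i * (2 * i - 1) / 6.

Definition P1 (T i : rat) : c6 := (1, 0, 0, 0, 0, 0).
Definition Pw (T i : rat) : c6 := (0, N1 T, 0, 0, 0, 0).
Definition Pc (T i : rat) : c6 := (0, i * N1 T, N2 T, 0, 0, 0).
Definition Pw2 (T i : rat) : c6 := (0, i * N1 T, 0, N2 T, 0, 0).
Definition Pwc (T i : rat) : c6 := (0, - (i * N2 T), 0, i * N2 T, N3 T, 0).
Definition Pc2 (T i : rat) : c6 :=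
  (0, - (i * (i - 1) * N2 T) + N1 T * S1 T i + 2 * N1 T * S3 T i,
   2 * N2 T * S2 T i, i * (i - 1) * N2 T, 2 * i * N3 T, N4 T).


Lemma multi1 i s : (0 < Tot s)%N ->
  iter i cpX (fun t => g6 ((1,0,0,0,0,0) : c6) (wq t) (cq t)) s * (fun _ : rat => 1 : rat) ((Tot s + i)%N%:R)
  = g6 (P1 (Tot s)%:R i%:R) (wq s) (cq s).
Proof.
apply: (@multi _ (fun _ : rat => 1 : rat) P1).
- by move=> T W C; rewrite /g6 /ev6 /= /N1 /N2 /N3 /N4 /S1 /S2 /S3; field.
- by move=> T i0 W C HT; rewrite /g6 /ev6 /= /N1 /N2 /N3 /N4 /S1 /S2 /S3; field.
Qed.

Lemma multiw i s : (0 < Tot s)%N ->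
  iter i cpX (fun t => g6 ((0,1,0,0,0,0) : c6) (wq t) (cq t)) s * N1 ((Tot s + i)%N%:R)
  = g6 (Pw (Tot s)%:R i%:R) (wq s) (cq s).
Proof.
apply: (@multi _ N1 Pw).
- by move=> T W C; rewrite /g6 /ev6 /= /N1 /N2 /N3 /N4 /S1 /S2 /S3; field.
- by move=> T i0 W C HT; rewrite /g6 /ev6 /= /N1 /N2 /N3 /N4 /S1 /S2 /S3; field.
Qed.

Lemma multic i s : (0 < Tot s)%N ->
  iter i cpX (fun t => g6 ((0,0,1,0,0,0) : c6) (wq t) (cq t)) s * N2 ((Tot s + i)%N%:R)
  = g6 (Pc (Tot s)%:R i%:R) (wq s) (cq s).
Proof.
apply: (@multi _ N2 Pc).
- by move=> T W C; rewrite /g6 /ev6 /= /N1 /N2 /N3 /N4 /S1 /S2 /S3; field.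
- by move=> T i0 W C HT; rewrite /g6 /ev6 /= /N1 /N2 /N3 /N4 /S1 /S2 /S3; field.
Qed.

Lemma multiw2 i s : (0 < Tot s)%N ->
  iter i cpX (fun t => g6 ((0,0,0,1,0,0) : c6) (wq t) (cq t)) s * N2 ((Tot s + i)%N%:R)
  = g6 (Pw2 (Tot s)%:R i%:R) (wq s) (cq s).
Proof.
apply: (@multi _ N2 Pw2).
- by move=> T W C; rewrite /g6 /ev6 /= /N1 /N2 /N3 /N4 /S1 /S2 /S3; field.
- by move=> T i0 W C HT; rewrite /g6 /ev6 /= /N1 /N2 /N3 /N4 /S1 /S2 /S3; field.
Qed.

Lemma multiwc i s : (0 < Tot s)%N ->
  iter i cpX (fun t => g6 ((0,0,0,0,1,0) : c6) (wq t) (cq t)) s * N3 ((Tot s + i)%N%:R)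
  = g6 (Pwc (Tot s)%:R i%:R) (wq s) (cq s).
Proof.
apply: (@multi _ N3 Pwc).
- by move=> T W C; rewrite /g6 /ev6 /= /N1 /N2 /N3 /N4 /S1 /S2 /S3; field.
- by move=> T i0 W C HT; rewrite /g6 /ev6 /= /N1 /N2 /N3 /N4 /S1 /S2 /S3; field.
Qed.

Lemma multic2 i s : (0 < Tot s)%N ->
  iter i cpX (fun t => g6 ((0,0,0,0,0,1) : c6) (wq t) (cq t)) s * N4 ((Tot s + i)%N%:R)
  = g6 (Pc2 (Tot s)%:R i%:R) (wq s) (cq s).
Proof.
apply: (@multi _ N4 Pc2).
- by move=> T W C; rewrite /g6 /ev6 /= /N1 /N2 /N3 /N4 /S1 /S2 /S3; field.
- by move=> T i0 W C HT; rewrite /g6 /ev6 /= /N1 /N2 /N3 /N4 /S1 /S2 /S3; field.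
Qed.

Definition invT (T : nat) (D : dist (seq nat)) := forall pa, pa \in D -> Tot pa.2 = T.

Lemma invT_bind (T : nat) (D : dist (seq nat)) : invT T D ->
  invT T.+1 (dist_bind D choose_parent).
Proof.
move=> H x /flattenP [l /mapP [pa Hpa ->]] /mapP [q Hq ->] /=.
move: Hq; rewrite /choose_parent => /mapP [i]; rewrite mem_iota add0n => /andP [_ lt] -> /=.
by rewrite Tot_incr // H.
Qed.

Lemma invT_iter (i T : nat) (D : dist (seq nat)) : invT T D ->
  invT (T + i) (iter i (fun D => dist_bind D choose_parent) D).
Proof.
elim: i => [|i IH] H /=; first by rewrite addn0.
by rewrite addnS; apply: invT_bind; apply: IH.
Qed.

Lemma invT_pa (m k : nat) : invT ((m.+1 * k).+1) (pa_circuit m k).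
Proof.
elim: k => [|k IH].
  by move=> pa; rewrite muln0 inE => /eqP -> .
rewrite /pa_circuit iterS -/(pa_circuit m k).
move=> x /flattenP [l /mapP [pa Hpa ->]] /mapP [q Hq ->] /=.
move: Hq; rewrite /insert_node => /mapP [pt Hpt ->] /=.
have Hs : invT (Tot pa.2) [:: (1, pa.2)] by move=> y; rewrite inE => /eqP ->.
have := @invT_iter m _ _ Hs _ Hpt.
rewrite (IH _ Hpa) => E.
rewrite /Tot sumn_rcons size_rcons addn0 addnS -/(Tot pt.2) E; lia.
Qed.

Lemma expect_ev6 (A : Type) (D : dist A) (k : c6) (f0 f1 f2 f3 f4 f5 : A -> rat) :
  expect D (fun s => ev6 k (f0 s) (f1 s) (f2 s) (f3 s) (f4 s) (f5 s)) =
  ev6 k (expect D f0) (expect D f1) (expect D f2) (expect D f3) (expect D f4) (expect D f5).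
Proof.
case: k => [[[[[k0 k1] k2] k3] k4] k5]; rewrite /expect /ev6.
rewrite (eq_bigr (fun pa => k0 * (pa.1 * f0 pa.2) + k1 * (pa.1 * f1 pa.2) + k2 * (pa.1 * f2 pa.2)
   + k3 * (pa.1 * f3 pa.2) + k4 * (pa.1 * f4 pa.2) + k5 * (pa.1 * f5 pa.2))); last first.
  by move=> pa _; ring.
by rewrite !big_split /= -!mulr_sumr.
Qed.

Lemma expect_divr (A : Type) (D : dist A) (f : A -> rat) (c : rat) :
  expect D (fun s => f s / c) = expect D f / c.
Proof. rewrite /expect mulr_suml; apply: eq_bigr => pa _; by rewrite mulrA. Qed.

Lemma expect_ext_in (D : dist (seq nat)) (X Y : seq nat -> rat) :
  (forall pa, pa \in D -> X pa.2 = Y pa.2) -> expect D X = expect D Y.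
Proof. by move=> H; rewrite /expect; apply: eq_big_seq => pa /H ->. Qed.

Lemma iter_ev6 (i : nat) (k : c6) (f0 f1 f2 f3 f4 f5 : seq nat -> rat) (s : seq nat) :
  iter i cpX (fun t => ev6 k (f0 t) (f1 t) (f2 t) (f3 t) (f4 t) (f5 t)) s =
  ev6 k (iter i cpX f0 s) (iter i cpX f1 s) (iter i cpX f2 s) (iter i cpX f3 s)
        (iter i cpX f4 s) (iter i cpX f5 s).
Proof.
elim: i s => [|i IH] s //=.
rewrite (@cpX_ext _ (fun t => ev6 k (iter i cpX f0 t) (iter i cpX f1 t) (iter i cpX f2 t)
   (iter i cpX f3 t) (iter i cpX f4 t) (iter i cpX f5 t))); last by move=> t _; apply: IH.
exact: expect_ev6.
Qed.

Definition E1 (D : dist (seq nat)) := expect D (fun _ => 1).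
Definition Ew (D : dist (seq nat)) := expect D wq.
Definition Ec (D : dist (seq nat)) := expect D cq.
Definition Ew2 (D : dist (seq nat)) := expect D (fun s => wq s ^+ 2).
Definition Ewc (D : dist (seq nat)) := expect D (fun s => wq s * cq s).
Definition Ec2 (D : dist (seq nat)) := expect D (fun s => cq s ^+ 2).
Definition evM (k : c6) (D : dist (seq nat)) := ev6 k (E1 D) (Ew D) (Ec D) (Ew2 D) (Ewc D) (Ec2 D).

Lemma expect_g6 (D : dist (seq nat)) (k : c6) :
  expect D (fun s => g6 k (wq s) (cq s)) = evM k D.
Proof. exact: expect_ev6. Qed.

Definition shift6 (k : c6) : c6 :=
  let: (k0, k1, k2, k3, k4, k5) := k in (k0 + k1 + k3, k1 + 2 * k3, k2 + k4, k3, k4, k5).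

Lemma wq_rcons t : wq (rcons t 0%N) = wq t + 1.
Proof. by rewrite /wq /white -cats1 count_cat /= natrD. Qed.
Lemma cq_rcons t : cq (rcons t 0%N) = cq t.
Proof.
rewrite /cq /cnt1 -cats1 count_cat.
have -> : count (eq_op^~ 1%N) [:: 0%N] = 0%N by [].
by rewrite addn0.
Qed.

Lemma natr_sub_neq0 (n j : nat) : (j < n)%N -> (n%:R - j%:R : rat) != 0.
Proof.
by move=> H; rewrite -natrB ?(ltnW H) // pnatr_eq0 subn_eq0 -ltnNge.
Qed.

Definition e0 : c6 := (1,0,0,0,0,0).
Definition e1 : c6 := (0,1,0,0,0,0).
Definition e2 : c6 := (0,0,1,0,0,0).
Definition e3 : c6 := (0,0,0,1,0,0).
Definition e4 : c6 := (0,0,0,0,1,0).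
Definition e5 : c6 := (0,0,0,0,0,1).

Lemma rec_pa (m k : nat) (base : c6) : (1 <= k)%N -> (2 <= m)%N ->
  let T0 := ((m.+1 * k).+1)%:R : rat in
  let T1 := ((m.+1 * k).+1 + m)%N%:R : rat in
  let M := m%:R : rat in
  let Dk := pa_circuit m k in
  evM base (pa_circuit m k.+1) =
  ev6 (shift6 base) (evM (P1 T0 M) Dk) (evM (Pw T0 M) Dk / N1 T1) (evM (Pc T0 M) Dk / N2 T1)
      (evM (Pw2 T0 M) Dk / N2 T1) (evM (Pwc T0 M) Dk / N3 T1) (evM (Pc2 T0 M) Dk / N4 T1).
Proof.
move=> hk hm T0 T1 M Dk.
rewrite -expect_g6 expect_pa.
have h1 : T1 - 1 != 0 by apply: (@natr_sub_neq0 _ 1%N); rewrite mulSn; lia.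
have h2 : T1 - 2 != 0 by apply: (@natr_sub_neq0 _ 2%N); rewrite mulSn; lia.
have h3 : T1 - 3 != 0 by apply: (@natr_sub_neq0 _ 3%N); rewrite mulSn; lia.
have h4 : T1 - 4 != 0 by apply: (@natr_sub_neq0 _ 4%N); rewrite mulSn; lia.
have N1nz : N1 T1 != 0 by rewrite /N1.
have N2nz : N2 T1 != 0 by rewrite /N2 mulf_neq0.
have N3nz : N3 T1 != 0 by rewrite /N3 !mulf_neq0.
have N4nz : N4 T1 != 0 by rewrite /N4 !mulf_neq0.
rewrite (@expect_ext_in _ _ (fun s => ev6 (shift6 base)
   (g6 (P1 T0 M) (wq s) (cq s)) (g6 (Pw T0 M) (wq s) (cq s) / N1 T1)
   (g6 (Pc T0 M) (wq s) (cq s) / N2 T1) (g6 (Pw2 T0 M) (wq s) (cq s) / N2 T1)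
   (g6 (Pwc T0 M) (wq s) (cq s) / N3 T1) (g6 (Pc2 T0 M) (wq s) (cq s) / N4 T1))).
  by rewrite expect_ev6 !expect_divr !expect_g6.
move=> pa Hpa.
have HT : Tot pa.2 = (m.+1 * k).+1 by apply: invT_pa.
have Hpos : (0 < Tot pa.2)%N by rewrite HT.
rewrite (@iter_ext _ _ (fun t => ev6 (shift6 base) (g6 e0 (wq t) (cq t)) (g6 e1 (wq t) (cq t))
   (g6 e2 (wq t) (cq t)) (g6 e3 (wq t) (cq t)) (g6 e4 (wq t) (cq t)) (g6 e5 (wq t) (cq t)))); last first.
  move=> t; rewrite wq_rcons cq_rcons.
  case: base => [[[[[k0 k1] k2] k3] k4] k5]; rewrite /g6 /ev6 /shift6 /e0 /e1 /e2 /e3 /e4 /e5 /=; ring.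
rewrite iter_ev6.
have E0 := @multi1 m _ Hpos; have Ew_ := @multiw m _ Hpos; have Ec_ := @multic m _ Hpos.
have Ew2_ := @multiw2 m _ Hpos; have Ewc_ := @multiwc m _ Hpos; have Ec2_ := @multic2 m _ Hpos.
rewrite HT -/T0 -/M in E0 Ew_ Ec_ Ew2_ Ewc_ Ec2_.
rewrite -/T1 in E0 Ew_ Ec_ Ew2_ Ewc_ Ec2_.
rewrite -E0 -Ew_ -Ec_ -Ew2_ -Ewc_ -Ec2_ mulr1 !mulfK //.
Qed.

Lemma rec_pa' (m k : nat) (base : c6) : (1 <= k)%N -> (2 <= m)%N ->
  evM base (pa_circuit m k.+1) =
  ev6 (shift6 base)
      (evM (P1 ((m%:R + 1) * k%:R + 1) m%:R) (pa_circuit m k))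
      (evM (Pw ((m%:R + 1) * k%:R + 1) m%:R) (pa_circuit m k) / N1 ((m%:R + 1) * (k%:R + 1)))
      (evM (Pc ((m%:R + 1) * k%:R + 1) m%:R) (pa_circuit m k) / N2 ((m%:R + 1) * (k%:R + 1)))
      (evM (Pw2 ((m%:R + 1) * k%:R + 1) m%:R) (pa_circuit m k) / N2 ((m%:R + 1) * (k%:R + 1)))
      (evM (Pwc ((m%:R + 1) * k%:R + 1) m%:R) (pa_circuit m k) / N3 ((m%:R + 1) * (k%:R + 1)))
      (evM (Pc2 ((m%:R + 1) * k%:R + 1) m%:R) (pa_circuit m k) / N4 ((m%:R + 1) * (k%:R + 1))).
Proof.
move=> hk hm.
have e0 : ((m.+1 * k).+1)%:R = (m%:R + 1) * k%:R + 1 :> rat by rewrite -natr1 natrM -natr1.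
have e1 : ((m.+1 * k).+1 + m)%N%:R = (m%:R + 1) * (k%:R + 1) :> rat.
  by rewrite natrD e0; ring.
by rewrite (@rec_pa m k base hk hm) /= e0 e1.
Qed.

Lemma iter_single (i : nat) :
  iter i (fun D => dist_bind D choose_parent) [:: (1, [:: 0%N])] = [:: (1, [:: i])].
Proof.
elim: i => [|i IH] //.
rewrite iterS IH /dist_bind /choose_parent /= addn0 addn1 mul1r divff //.
by rewrite pnatr_eq0.
Qed.

Lemma pa1 (m : nat) : pa_circuit m 1 = [:: (1, [:: m; 0%N])].
Proof.
change (dist_bind [:: (1, [:: 0%N])] (insert_node m) = [:: (1, [:: m; 0%N])]).
by rewrite /dist_bind /= /insert_node iter_single /= mul1r.
Qed.

Definition Fw (M K : rat) : rat :=
  ((- 1 * M) * K ^+ 0 + (- 1 + 1 * M ^+ 2) * K ^+ 1 + (1 + 2 * M + 1 * M ^+ 2) * K ^+ 2) /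
  ((2*M+1) * ((M+1)*K - 1)).

Definition Fw2 (M K : rat) : rat :=
  ((- 1 * M - 3 * M ^+ 2 - 6 * M ^+ 3 - 2 * M ^+ 4) * K ^+ 0 + (- 1 * M - 7 * M ^+ 2 - 3 * M ^+ 3 + 3 * M ^+ 4) * K ^+ 1 + (- 1 - 3 * M + 5 * M ^+ 2 + (1*10+5) * M ^+ 3 + 8 * M ^+ 4) * K ^+ 2 + (1 + 6 * M + (1*10+2) * M ^+ 2 + (1*10) * M ^+ 3 + 3 * M ^+ 4) * K ^+ 3) /
  (((2*M+1)^+2*(3*M+1)) * ((M+1)*K - 1)).

Definition Fc (M K : rat) : rat :=
  ((- 1 - 2 * M - 3 * M ^+ 2 - 2 * M ^+ 3) * K ^+ 0 + (1 - 1 * M ^+ 2) * K ^+ 1 + (2 * M + 4 * M ^+ 2 + 2 * M ^+ 3) * K ^+ 2) /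
  ((2*(2*M+1)*(3*M+1)) * ((M+1)*K - 1)).

Definition Fwc (M K : rat) : rat :=
  ((- 4 * M + 2 * M ^+ 2 + (1*10+6) * M ^+ 3 + (2*10+2) * M ^+ 4 + (1*10+2) * M ^+ 5) * K ^+ 0 + (2 + (2*10+1) * M + (2*10+9) * M ^+ 2 + (2*10+5) * M ^+ 3 + (2*10+5) * M ^+ 4 + (1*10) * M ^+ 5) * K ^+ 1 + (- 3 - (2*10+1) * M - (2*10+1) * M ^+ 2 - 5 * M ^+ 3 - (2*10+4) * M ^+ 4 - (3*10) * M ^+ 5 - 8 * M ^+ 6) * K ^+ 2 + (1 + 2 * M - (2*10+6) * M ^+ 2 - (8*10) * M ^+ 3 - (7*10+9) * M ^+ 4 - (2*10+6) * M ^+ 5) * K ^+ 3 + (2 * M + (1*10+6) * M ^+ 2 + (4*10+4) * M ^+ 3 + (5*10+6) * M ^+ 4 + (3*10+4) * M ^+ 5 + 8 * M ^+ 6) * K ^+ 4) /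
  ((2*(2*M+1)^+2*(3*M+1)*(4*M+1)) * ((M+1)*K - 1) * ((M+1)*K - 2)).

Definition Fc2 (M K : rat) : rat :=
  ((6 + ((1*10+2)*10+2) * M + ((3*10+1)*10+4) * M ^+ 2 - (((1*10+4)*10+5)*10+8) * M ^+ 3 - (((8*10+6)*10+2)*10+2) * M ^+ 4 - ((((2*10)*10+8)*10)*10+2) * M ^+ 5 - ((((2*10+9)*10+5)*10+1)*10+4) * M ^+ 6 - ((((2*10+5)*10+9)*10+3)*10+4) * M ^+ 7 - ((((1*10)*10+8)*10+5)*10+6) * M ^+ 8 - ((3*10+1)*10+2) * M ^+ 9 + ((2*10+8)*10+8) * M ^+ 10) * K ^+ 0 + (- (1*10+1) - ((2*10+1)*10+5) * M - ((3*10+9)*10+9) * M ^+ 2 + (((3*10+1)*10+4)*10+1) * M ^+ 3 + ((((1*10+3)*10+6)*10+2)*10+7) * M ^+ 4 + ((((2*10+6)*10+1)*10+1)*10+9) * M ^+ 5 + ((((3*10+1)*10+9)*10+2)*10+3) * M ^+ 6 + ((((3*10+2)*10+6)*10)*10+7) * M ^+ 7 + ((((2*10+3)*10+7)*10+4)*10) * M ^+ 8 + (((7*10+4)*10+6)*10+8) * M ^+ 9 + ((2*10+4)*10) * M ^+ 10) * K ^+ 1 + (6 + ((1*10)*10) * M - (9*10+4) * M ^+ 2 - (((2*10+7)*10+7)*10+6) * M ^+ 3 - (((5*10+8)*10+6)*10+2) * M ^+ 4 + ((5*10+3)*10+2) * M ^+ 5 + ((((1*10+7)*10+7)*10+7)*10+4)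 * M ^+ 6 + ((((2*10+1)*10+7)*10+7)*10+6) * M ^+ 7 + (((4*10+9)*10+7)*10+6) * M ^+ 8 - (((4*10+2)*10+7)*10+2) * M ^+ 9 - (((1*10+4)*10+4)*10) * M ^+ 10) * K ^+ 2 + (- 1 - 3 * M + ((2*10+3)*10+5) * M ^+ 2 + (((1*10+2)*10+7)*10+7) * M ^+ 3 + ((8*10+3)*10+3) * M ^+ 4 - (((6*10+9)*10)*10+5) * M ^+ 5 - ((((2*10+3)*10+6)*10+1)*10+5) * M ^+ 6 - ((((3*10+5)*10+7)*10+3)*10+7) * M ^+ 7 - ((((2*10+6)*10+8)*10+9)*10+2) * M ^+ 8 - (((8*10+5)*10+5)*10+2) * M ^+ 9 - ((4*10+8)*10) * M ^+ 10) * K ^+ 3 + (- 4 * M - (5*10+2) * M ^+ 2 - ((1*10+4)*10) * M ^+ 3 + ((1*10+5)*10+6) * M ^+ 4 + ((9*10+5)*10+6) * M ^+ 5 + (((2*10+2)*10+1)*10+2) * M ^+ 6 + (((4*10+7)*10+3)*10+2) * M ^+ 7 + (((6*10+5)*10+1)*10+6) * M ^+ 8 + (((4*10+4)*10+4)*10) * M ^+ 9 + (((1*10+1)*10+5)*10+2) * M ^+ 10) * K ^+ 4 + (- 4 * M ^+ 2 - (4*10+4) * M ^+ 3 - ((1*10+3)*10+2) * M ^+ 4 + ((1*10)*10) * M ^+ 5 + (((1*10+2)*10+2)*10) * M ^+ 6 + (((2*10+5)*10+5)*10+6) * M ^+ 7 + (((2*10+5)*10+1)*10+6) * M ^+ 8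 + (((1*10+2)*10+2)*10+8) * M ^+ 9 + ((2*10+4)*10) * M ^+ 10) * K ^+ 5) /
  ((4*(2*M+1)^+2*(3*M+1)^+2*(4*M+1)*(5*M+1)*(3*M-1)) * ((M+1)*K - 1) * ((M+1)*K - 2) * ((M+1)*K - 3)).


Lemma part1 (m k : nat) : (2 <= m)%N -> (1 <= k)%N ->
  E1 (pa_circuit m k) = 1 /\ Ew (pa_circuit m k) = Fw m%:R k%:R /\ Ew2 (pa_circuit m k) = Fw2 m%:R k%:R.
Proof.
move=> hm; have hM : 2 <= m%:R :> rat by rewrite (ler_nat _ 2%N).
elim: k => [//|k IH] hk.
have p1 : 2 * m%:R + 1 != 0 :> rat by apply/eqP; lra.
have p2 : 3 * m%:R + 1 != 0 :> rat by apply/eqP; lra.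
have p0 : m%:R != 0 :> rat by apply/eqP; lra.
case: (posnP k) => [-> | kpos].
  rewrite pa1 /E1 /Ew /Ew2 !expect_single /wq /white /=.
  have -> : (m == 0%N) = false by apply/eqP; lia.
  rewrite /Fw /Fw2 /=.
  split; first by [].
  by split; field; repeat (apply/andP; split); apply/eqP; (clear - hM hK || clear - hM); first [lra | nra].
have hK : 1 <= k%:R :> rat by rewrite (ler_nat _ 1%N).
have [h1 [h2 h3]] := IH kpos.
have eK : (k.+1)%:R = k%:R + 1 :> rat by rewrite natr1.
split; last split.
- transitivity (evM e0 (pa_circuit m k.+1)); first by rewrite /evM /ev6 /e0 /=; ring.
  rewrite rec_pa' // /evM /shift6 /e0 /P1 /Pw /Pc /Pw2 /Pwc /Pc2 /ev6 /= h1 h2 h3.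
  rewrite /N1 /N2 /N3 /N4 /S1 /S2 /S3 /Fw /Fw2.
  field; repeat (apply/andP; split); apply/eqP; (clear - hM hK || clear - hM); first [lra | nra].
- transitivity (evM e1 (pa_circuit m k.+1)); first by rewrite /evM /ev6 /e1 /=; ring.
  rewrite rec_pa' // /evM /shift6 /e1 /P1 /Pw /Pc /Pw2 /Pwc /Pc2 /ev6 /= h1 h2 h3 eK.
  rewrite /N1 /N2 /N3 /N4 /S1 /S2 /S3 /Fw /Fw2.
  field; repeat (apply/andP; split); apply/eqP; (clear - hM hK || clear - hM); first [lra | nra].
- transitivity (evM e3 (pa_circuit m k.+1)); first by rewrite /evM /ev6 /e3 /=; ring.
  rewrite rec_pa' // /evM /shift6 /e3 /P1 /Pw /Pc /Pw2 /Pwc /Pc2 /ev6 /= h1 h2 h3 eK.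
  rewrite /N1 /N2 /N3 /N4 /S1 /S2 /S3 /Fw /Fw2.
  field; repeat (apply/andP; split); apply/eqP; (clear - hM hK || clear - hM); first [lra | nra].
Qed.

Lemma mom_pa1 (m : nat) : (2 <= m)%N ->
  E1 (pa_circuit m 1) = 1 /\ Ew (pa_circuit m 1) = 1 /\ Ec (pa_circuit m 1) = 0 /\
      Ew2 (pa_circuit m 1) = 1 /\ Ewc (pa_circuit m 1) = 0 /\ Ec2 (pa_circuit m 1) = 0.
Proof.
move=> hm.
rewrite pa1 /E1 /Ew /Ec /Ew2 /Ewc /Ec2 !expect_single /wq /cq /white /cnt1 /=.
have -> : (m == 0%N) = false by apply/eqP; lia.
have -> : (m == 1%N) = false by apply/eqP; lia.
by do !split; rewrite /=; ring.
Qed.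

Lemma part2 (m k : nat) : (2 <= m)%N -> (2 <= k)%N ->
  [/\ Ec (pa_circuit m k) = Fc m%:R k%:R, Ewc (pa_circuit m k) = Fwc m%:R k%:R &
      Ec2 (pa_circuit m k) = Fc2 m%:R k%:R].
Proof.
move=> hm; have hM : 2 <= m%:R :> rat by rewrite (ler_nat _ 2%N).
elim: k => [//|k IH] hk.
case: (ltnP k 2) => hk2.
  have -> : k = 1%N by lia.
  have [b0 [b1 [b2 [b3 [b4 b5]]]]] := @mom_pa1 m hm.
  split.
  - transitivity (evM e2 (pa_circuit m 2)); first by rewrite /evM /ev6 /e2 /=; ring.
    rewrite (@rec_pa' m 1 _ isT hm) /evM /shift6 /e2 /P1 /Pw /Pc /Pw2 /Pwc /Pc2 /ev6 /= b0 b1 b2 b3 b4 b5.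
    rewrite /N1 /N2 /N3 /N4 /S1 /S2 /S3 /Fc.
    field; repeat (apply/andP; split); apply/eqP; (clear - hM hK || clear - hM); first [lra | nra].
  - transitivity (evM e4 (pa_circuit m 2)); first by rewrite /evM /ev6 /e4 /=; ring.
    rewrite (@rec_pa' m 1 _ isT hm) /evM /shift6 /e4 /P1 /Pw /Pc /Pw2 /Pwc /Pc2 /ev6 /= b0 b1 b2 b3 b4 b5.
    rewrite /N1 /N2 /N3 /N4 /S1 /S2 /S3 /Fwc.
    field; repeat (apply/andP; split); apply/eqP; (clear - hM hK || clear - hM); first [lra | nra].
  - transitivity (evM e5 (pa_circuit m 2)); first by rewrite /evM /ev6 /e5 /=; ring.
    rewrite (@rec_pa' m 1 _ isT hm) /evM /shift6 /e5 /P1 /Pw /Pc /Pw2 /Pwc /Pc2 /ev6 /= b0 b1 b2 b3 b4 b5.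
    rewrite /N1 /N2 /N3 /N4 /S1 /S2 /S3 /Fc2.
    field; repeat (apply/andP; split); apply/eqP; (clear - hM hK || clear - hM); first [lra | nra].
have hK : 2 <= k%:R :> rat by rewrite (ler_nat _ 2%N).
have [h1 [h2 h3]] := @part1 m k hm (ltnW hk2).
have [h4 h5 h6] := IH hk2.
have eK : (k.+1)%:R = k%:R + 1 :> rat by rewrite natr1.
have hk1 : (1 <= k)%N by lia.
split.
- transitivity (evM e2 (pa_circuit m k.+1)); first by rewrite /evM /ev6 /e2 /=; ring.
  rewrite rec_pa' // /evM /shift6 /e2 /P1 /Pw /Pc /Pw2 /Pwc /Pc2 /ev6 /= h1 h2 h3 h4 h5 h6 eK.
  rewrite /N1 /N2 /N3 /N4 /S1 /S2 /S3 /Fw /Fw2 /Fc /Fwc /Fc2.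
  field; repeat (apply/andP; split); apply/eqP; (clear - hM hK || clear - hM); first [lra | nra].
- transitivity (evM e4 (pa_circuit m k.+1)); first by rewrite /evM /ev6 /e4 /=; ring.
  rewrite rec_pa' // /evM /shift6 /e4 /P1 /Pw /Pc /Pw2 /Pwc /Pc2 /ev6 /= h1 h2 h3 h4 h5 h6 eK.
  rewrite /N1 /N2 /N3 /N4 /S1 /S2 /S3 /Fw /Fw2 /Fc /Fwc /Fc2.
  field; repeat (apply/andP; split); apply/eqP; (clear - hM hK || clear - hM); first [lra | nra].
- transitivity (evM e5 (pa_circuit m k.+1)); first by rewrite /evM /ev6 /e5 /=; ring.
  rewrite rec_pa' // /evM /shift6 /e5 /P1 /Pw /Pc /Pw2 /Pwc /Pc2 /ev6 /= h1 h2 h3 h4 h5 h6 eK.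
  rewrite /N1 /N2 /N3 /N4 /S1 /S2 /S3 /Fw /Fw2 /Fc /Fwc /Fc2.
  field; repeat (apply/andP; split); apply/eqP; (clear - hM hK || clear - hM); first [lra | nra].
Qed.

Definition pp0 (M : rat) : rat := ((2*10+4) + ((4*10+8)*10+8) * M + (((1*10+2)*10+5)*10+6) * M ^+ 2 - (((5*10+8)*10+3)*10+2) * M ^+ 3 - ((((3*10+4)*10+4)*10+8)*10+8) * M ^+ 4 - ((((8*10+3)*10+2)*10)*10+8) * M ^+ 5 - (((((1*10+1)*10+8)*10)*10+5)*10+6) * M ^+ 6 - (((((1*10)*10+3)*10+7)*10+3)*10+6) * M ^+ 7 - ((((4*10+3)*10+4)*10+2)*10+4) * M ^+ 8 - (((1*10+2)*10+4)*10+8) * M ^+ 9 + (((1*10+1)*10+5)*10+2) * M ^+ 10).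
Definition pp1 (M : rat) : rat := (- (4*10+4) - ((9*10+5)*10+6) * M - (((3*10+1)*10+3)*10+2) * M ^+ 2 + (((8*10+3)*10+4)*10) * M ^+ 3 + ((((6*10+2)*10+3)*10+8)*10) * M ^+ 4 + (((((1*10+4)*10+5)*10+6)*10+6)*10) * M ^+ 5 + (((((1*10+8)*10+5)*10+8)*10+6)*10+8) * M ^+ 6 + (((((1*10+5)*10+8)*10)*10+7)*10+6) * M ^+ 7 + ((((9*10+4)*10+9)*10+6)*10) * M ^+ 8 + ((((2*10+9)*10+8)*10+7)*10+2) * M ^+ 9 + ((9*10+6)*10) * M ^+ 10).
Definition pp2 (M : rat) : rat := ((2*10+4) + ((5*10+7)*10+6) * M + (((2*10+5)*10+2)*10) * M ^+ 2 - (((1*10+3)*10+1)*10+2) * M ^+ 3 - ((((3*10)*10+7)*10+1)*10+2) * M ^+ 4 - ((((8*10+1)*10+2)*10+8)*10) * M ^+ 5 - ((((9*10+8)*10+8)*10+7)*10+2) * M ^+ 6 - ((((6*10+4)*10+4)*10+8)*10) * M ^+ 7 - ((((3*10)*10+7)*10+8)*10+4) * M ^+ 8 - ((((1*10+7)*10)*10+8)*10+8) * M ^+ 9 - (((5*10+7)*10+6)*10) * M ^+ 10).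
Definition pp3 (M : rat) : rat := (- 4 - ((1*10)*10+8) * M - ((6*10+1)*10+2) * M ^+ 2 - ((7*10)*10) * M ^+ 3 + (((3*10+6)*10+8)*10+4) * M ^+ 4 + ((((1*10+4)*10+1)*10+7)*10+2) * M ^+ 5 + ((((1*10+9)*10+6)*10+3)*10+6) * M ^+ 6 + (((9*10+3)*10+2)*10+4) * M ^+ 7 - (((4*10+6)*10+5)*10+6) * M ^+ 8 - (((6*10+5)*10+6)*10) * M ^+ 9 - (((1*10+9)*10+2)*10) * M ^+ 10).

Definition D0 (M : rat) : rat := 4*(2*M+1)^+2*(3*M+1)^+2*(4*M+1)*(5*M+1)*(3*M-1).

Lemma absbound (p0 p1 p2 p3 x : rat) : 1 <= x ->
  `|p0 + p1 * x + p2 * x ^+ 2 + p3 * x ^+ 3| <= (`|p0| + `|p1| + `|p2| + `|p3|) * x ^+ 3.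
Proof.
move=> hx.
have x0 : 0 <= x by lra.
have c1 : 1 <= x ^+ 3 by rewrite !exprS expr0; nra.
have c2 : x <= x ^+ 3 by rewrite !exprS expr0; nra.
have c3 : x ^+ 2 <= x ^+ 3 by rewrite !exprS expr0; nra.
have e1 : `|p1 * x| = `|p1| * x by rewrite normrM (ger0_norm x0).
have e2 : `|p2 * x ^+ 2| = `|p2| * x ^+ 2 by rewrite normrM (ger0_norm (exprn_ge0 2 x0)).
have e3 : `|p3 * x ^+ 3| = `|p3| * x ^+ 3 by rewrite normrM (ger0_norm (exprn_ge0 3 x0)).
have t1 := ler_normD (p0 + p1 * x + p2 * x ^+ 2) (p3 * x ^+ 3).
have t2 := ler_normD (p0 + p1 * x) (p2 * x ^+ 2).
have t3 := ler_normD p0 (p1 * x).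
rewrite e1 e2 e3 in t1 t2 t3.
have n0 := normr_ge0 p0; have n1 := normr_ge0 p1; have n2 := normr_ge0 p2; have n3 := normr_ge0 p3.
have d1 : `|p0| <= `|p0| * x ^+ 3 by rewrite -{1}(mulr1 `|p0|); apply: ler_wpM2l.
have d2 : `|p1| * x <= `|p1| * x ^+ 3 by apply: ler_wpM2l.
have d3 : `|p2| * x ^+ 2 <= `|p2| * x ^+ 3 by apply: ler_wpM2l.
lra.
Qed.

Lemma cube_le (M x : rat) : 2 <= M -> 2 <= x ->
  x ^+ 3 <= ((M + 1) * x - 1) * ((M + 1) * x - 2) * ((M + 1) * x - 3).
Proof.
move=> hM hx.
have a1 : x <= (M + 1) * x - 1 by nra.
have a2 : x <= (M + 1) * x - 2 by nra.
have a3 : x <= (M + 1) * x - 3 by nra.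
have x0 : 0 <= x by lra.
rewrite !exprS expr0 mulr1 mulrA.
apply: ler_pM; [nra | lra | | exact: a3].
apply: ler_pM; [lra | lra | exact: a1 | exact: a2].
Qed.

Lemma D0pos (M : rat) : 2 <= M -> 0 < D0 M.
Proof.
move=> hM.
have q1 : 0 < 2*M+1 by lra.
have q2 : 0 < 3*M+1 by lra.
have q3 : 0 < 4*M+1 by lra.
have q4 : 0 < 5*M+1 by lra.
have q5 : 0 < 3*M-1 by lra.
have q0 : 0 < 4 :> rat by [].
rewrite /D0 !mulr_gt0 // exprn_gt0 //.
Qed.

Lemma final_bound (P S D N x : rat) : 0 < D -> 0 < N -> x ^+ 3 <= N ->
  `|P| <= S * x ^+ 3 -> 0 <= S -> `|P / (D * N)| <= S / D.
Proof.
move=> hD hN hxN hP hS.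
have hDN : 0 < D * N by apply: mulr_gt0.
rewrite normrM normfV (gtr0_norm hDN) ler_pdivrMr //.
have -> : S / D * (D * N) = S * N by field; apply/eqP; lra.
apply: (le_trans hP); exact: ler_wpM2l.
Qed.

Theorem proposition3 (m : nat) (hm : (2 <= m)%N) :
  (forall n : nat, (1 <= n)%N ->
     let mq : rat := m%:R in let nq : rat := n%:R in
     expect (pa_circuit m n) (fun s => ((white s) ^ 2)%N%:R) =
       (mq + 1) ^+ 3 * nq ^+ 3 / ((mq * nq + nq - 1) * (2 * mq + 1) ^+ 2)
     + ((8 * mq ^+ 2 - mq - 1) * (mq + 1) ^+ 2 * nq ^+ 2
        + mq * (mq + 1) * (3 * mq ^+ 2 - 6 * mq - 1) * nq
        - mq * (2 * mq ^+ 3 + 6 * mq ^+ 2 + 3 * mq + 1))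
       / ((mq * nq + nq - 1) * (2 * mq + 1) ^+ 2 * (3 * mq + 1)))
  /\
  (exists (C : rat) (N : nat), forall n : nat, (N <= n)%N ->
     let mq : rat := m%:R in let nq : rat := n%:R in
     `| expect (pa_circuit m n) (fun s => ((blue s) ^ 2)%N%:R)
        - (4 * mq ^+ 2 * (mq + 1) ^+ 2
             / ((3 * mq + 1) ^+ 2 * (2 * mq + 1) ^+ 2) * nq ^+ 2
           + (96 * mq ^+ 4 + 138 * mq ^+ 3 + 83 * mq ^+ 2 + 18 * mq + 1)
             / ((5 * mq + 1) * (4 * mq + 1) * (3 * mq + 1) ^+ 2)
             * (4 * (mq + 1) * mq / (2 * mq + 1) ^+ 2) * nq) | <= C).
Proof.
have hM : 2 <= m%:R :> rat by rewrite (ler_nat _ 2%N).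
split.
- move=> n hn mq nq.
  have [_ [_ h3]] := @part1 m n hm hn.
  have -> : expect (pa_circuit m n) (fun s => ((white s) ^ 2)%N%:R) = Ew2 (pa_circuit m n).
    by rewrite /Ew2 /expect; apply: eq_bigr => pa _; rewrite /wq natrX.
  have hN : 1 <= n%:R :> rat by rewrite (ler_nat _ 1%N).
  rewrite h3 /mq /nq /Fw2.
  field; repeat (apply/andP; split); apply/eqP; clear - hM hN; first [lra | nra].
- exists ((`|pp0 m%:R| + `|pp1 m%:R| + `|pp2 m%:R| + `|pp3 m%:R|) / D0 m%:R), 2%N.
  move=> n hn; cbv zeta; set mq := (m%:R : rat); set nq := (n%:R : rat).
  have [_ _ h6] := @part2 m n hm hn.
  have -> : expect (pa_circuit m n) (fun s => ((blue s) ^ 2)%N%:R) = 4 * Ec2 (pa_circuit m n).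
    rewrite /Ec2 /expect mulr_sumr; apply: eq_bigr => pa _.
    rewrite /blue /cq /cnt1 natrX natrM; ring.
  have hN : 2 <= n%:R :> rat by rewrite (ler_nat _ 2%N).
  have key : 4 * Fc2 mq nq - (4 * mq ^+ 2 * (mq + 1) ^+ 2
             / ((3 * mq + 1) ^+ 2 * (2 * mq + 1) ^+ 2) * nq ^+ 2
           + (96 * mq ^+ 4 + 138 * mq ^+ 3 + 83 * mq ^+ 2 + 18 * mq + 1)
             / ((5 * mq + 1) * (4 * mq + 1) * (3 * mq + 1) ^+ 2)
             * (4 * (mq + 1) * mq / (2 * mq + 1) ^+ 2) * nq)
    = (pp0 mq + pp1 mq * nq + pp2 mq * nq ^+ 2 + pp3 mq * nq ^+ 3) /
      (D0 mq * (((mq + 1) * nq - 1) * ((mq + 1) * nq - 2) * ((mq + 1) * nq - 3))).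
    rewrite /mq /nq /Fc2 /pp0 /pp1 /pp2 /pp3 /D0.
    field; repeat (apply/andP; split); apply/eqP; clear - hM hN; first [lra | nra].
  rewrite h6 key; clear key h6.
  have D0pos : 0 < D0 mq by apply: D0pos.
  have c3 := @cube_le _ _ hM hN.
  have x3pos : 0 < n%:R ^+ 3 :> rat by apply: exprn_gt0; lra.
  have N3pos : 0 < ((mq + 1) * nq - 1) * ((mq + 1) * nq - 2) * ((mq + 1) * nq - 3).
    by apply: (lt_le_trans x3pos).
  have Spos : 0 <= `|pp0 mq| + `|pp1 mq| + `|pp2 mq| + `|pp3 mq| :=
    addr_ge0 (addr_ge0 (addr_ge0 (normr_ge0 _) (normr_ge0 _)) (normr_ge0 _)) (normr_ge0 _).
  have hx1 : 1 <= nq by rewrite /nq; clear - hN; lra.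
  have t1 := (@final_bound (pp0 mq + pp1 mq * nq + pp2 mq * nq ^+ 2 + pp3 mq * nq ^+ 3)
    (`|pp0 mq| + `|pp1 mq| + `|pp2 mq| + `|pp3 mq|) (D0 mq)
    (((mq + 1) * nq - 1) * ((mq + 1) * nq - 2) * ((mq + 1) * nq - 3)) nq D0pos N3pos).
  have t2 := t1 c3.
  have t3 := t2 (absbound (pp0 mq) (pp1 mq) (pp2 mq) (pp3 mq) nq hx1).
  have t4 := t3 Spos.
  exact: t4.
Qed.
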